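(* Let $r\in[0,1]^A$ be a reward vector, $\tau>0$, $\pi^*$ the deterministic policy putting all mass on an optimal action $a^*\in\arg\max_ar(a)$, and $\pi^*_\tau=\mathrm{softmax}(r/\tau)$, i.e. $\pi^*_\tau(a)=e^{r(a)/\tau}/\sum_{a'}e^{r(a')/\tau}$. Then $$(\pi^*-\pi^*_\tau)^\top r\le\tau\,W\Big(\frac{A-1}{e}\Big),$$ where $W:[0,\infty)\to[0,\infty)$ is the principal branch of the Lambert $W$ function, defined by $W(x)e^{W(x)}=x$. *)

(* Defs.v *)
From HB Require Import structures.
From mathcomp Require Import all_boot all_order all_algebra.
From mathcomp Require Import all_classical all_reals all_analysis.
Set Implicit Arguments. Unset Strict Implicit. Unset Printing Implicit Defensive.
Import Order.TTheory GRing.Theory Num.Theory.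
Local Open Scope ring_scope.
Local Open Scope classical_set_scope.

Definition LambertW (R : realType) (x : R) : R :=
  xget 0 [set w : R | 0 <= w /\ w * expR w = x].

Definition softmax (R : realType) (n : nat) (tau : R) (r : 'I_n -> R) (a : 'I_n) : R :=
  expR (r a / tau) / \sum_(a' < n) expR (r a' / tau).

Definition dirac_policy (R : realType) (n : nat) (astar : 'I_n) (a : 'I_n) : R :=
  (a == astar)%:R.

(* Main.v *)
Require Import Defs.
From HB Require Import structures.
From mathcomp Require Import all_boot all_order all_algebra.
From mathcomp Require Import all_classical all_reals all_analysis.
From mathcomp Require Import ring lra.
Import Order.TTheory GRing.Theory Num.Theory.
Import numFieldTopology.Exports.
Local Open Scope ring_scope.

Lemma W_spec (R : realType) (c : R) : 0 <= c ->
  0 <= LambertW c /\ LambertW c * expR (LambertW c) = c.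
Proof.
move=> c0; rewrite /LambertW; apply: (@xgetPex _ 0 [set w : R | 0 <= w /\ w * expR w = c]).
have [||w]:= @IVT R (fun w => w * expR w) 0 c c c0.
- have H : forall x : R, {for x, continuous (fun w : R => w * expR w)}.
    move=> x; apply: continuousM; [exact: cvg_id | exact: continuous_expR].
  exact: continuous_subspaceT H.
- rewrite mul0r; apply/andP; split.
    by rewrite ge_min c0.
  rewrite le_max; apply/orP; right.
  by rewrite -{1}[c]mulr1 ler_wpM2l // -expR0 ler_expR.
rewrite in_itv /= => /andP[w0 _] hw; by exists w.
Qed.

Lemma term_bound (R : realType) (tau w M ra : R) : 0 < tau ->
  expR (ra / tau) * (M - ra - tau * w) <= tau * expR (M / tau) * expR (- (w + 1)).
Proof.
move=> ht.
set x := (M - ra) / tau - w.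
have h1 : M - ra - tau * w = tau * x.
  by rewrite /x mulrBr mulrCA divff ?gt_eqF // mulr1.
have h2 : ra / tau = M / tau + - (x + w).
  by rewrite /x subrK mulrBl opprB addrC subrK.
rewrite h1 h2 expRD.
have hx : x <= expR (x - 1) by have := expR_ge1Dx (x - 1); rewrite addrC subrK.
have : expR (- (x + w)) * x <= expR (- (x + w)) * expR (x - 1).
  by rewrite ler_wpM2l // expR_ge0.
rewrite -expRD.
have -> : - (x + w) + (x - 1) = - (w + 1) by ring.
move=> H.
have -> : expR (M / tau) * expR (- (x + w)) * (tau * x) = tau * expR (M / tau) * (expR (- (x + w)) * x) by ring.
by rewrite ler_wpM2l // mulr_ge0 ?expR_ge0 // ltW.
Qed.

Theorem lemma14 (R : realType) (n : nat) (r : 'I_n -> R) (tau : R)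
  (astar : 'I_n)
  (hr : forall a, 0 <= r a <= 1)
  (htau : 0 < tau)
  (hopt : forall a, r a <= r astar) :
  \sum_(a < n) (dirac_policy R astar a - softmax tau r a) * r a
    <= tau * LambertW ((n%:R - 1) / expR 1).
Proof.
have n0 : (0 < n)%N by apply: leq_ltn_trans (ltn_ord astar).
set c := (n%:R - 1) / expR 1.
have c0 : 0 <= c.
  rewrite /c divr_ge0 ?expR_ge0 // subr_ge0.
  by rewrite (_ : 1 = 1%:R) // ler_nat.
have [w0 hw] := @W_spec R c c0.
set w := LambertW c in w0 hw *.
set M := r astar.
set E := fun a => expR (r a / tau).
set Z := \sum_(a < n) E a.
have Zpos : 0 < Z.
  rewrite /Z (bigD1 astar) //= ltr_pwDl ?expR_gt0 //.
  by apply: sumr_ge0 => i _; exact: expR_ge0.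
have hsm : forall a, softmax tau r a = E a / Z by [].
have hsum1 : \sum_(a < n) E a / Z = 1.
  by rewrite -mulr_suml divff ?gt_eqF.
have hdir : \sum_(a < n) dirac_policy R astar a * r a = M.
  rewrite (bigD1 astar) //= big1 ?addr0 /dirac_policy ?eqxx ?mul1r //.
  by move=> i /negPf ->; rewrite mul0r.
have -> : \sum_(a < n) (dirac_policy R astar a - softmax tau r a) * r a
   = (\sum_(a < n) E a * (M - r a)) / Z.
  under eq_bigr do rewrite mulrBl.
  rewrite sumrB hdir mulr_suml.
  have hM : M = \sum_(a < n) E a / Z * M by rewrite -mulr_suml hsum1 mul1r.
  rewrite {1}hM -sumrB; apply: eq_bigr => i _; rewrite hsm; ring.
rewrite ler_pdivrMr //.
rewrite -subr_le0.
have -> : \sum_(a < n) E a * (M - r a) - tau * w * Z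
   = \sum_(a < n) E a * (M - r a - tau * w).
  rewrite /Z mulr_sumr -sumrB; apply: eq_bigr => i _; ring.
rewrite (bigD1 astar) //=.
have hb : \sum_(i < n | i != astar) E i * (M - r i - tau * w)
    <= \sum_(i < n | i != astar) tau * expR (M / tau) * expR (- (w + 1)).
  by apply: ler_sum => i _; exact: term_bound.
rewrite sumr_const cardC1 card_ord in hb.
have hw2 : w = (n.-1)%:R * expR (- (w + 1)).
  have : w = c * expR (- w) by rewrite -hw -mulrA -expRD subrr expR0 mulr1.
  rewrite /c -subn1 natrB // => hw'; rewrite {1}hw'.
  rewrite opprD expRD (expRN 1); ring.
rewrite -/M subrr add0r.
apply: (le_trans (lerD (lexx _) hb)).
have -> : tau * expR (M / tau) * expR (- (w + 1)) *+ n.-1 = tau * expR (M / tau) * w.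
  by rewrite [in RHS]hw2 -mulr_natr; ring.
rewrite /E -/M.
have -> : expR (M / tau) * (- (tau * w)) + tau * expR (M / tau) * w = 0 by ring.
by [].
Qed.
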